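(* Let $f:[0,1]\to[0,\infty)$ be a function that is concave and increasing on $[0,\tfrac12]$ and satisfies $f(x)=f(1-x)$ for all $x\in[0,1]$. Let $k\ge 1$ and let $x_1,\dots,x_k\in[-1,1]$ be real numbers such that $x:=\sum_{i=1}^k x_i\in[-1,1]$. Then \[ f(|x|)\le \sum_{i=1}^k f(|x_i|). \] *)

(* Defs.v *)
From Stdlib Require Import Reals.
Open Scope R_scope.

Definition concave_on (f : R -> R) (a b : R) : Prop :=
  forall x y t, a <= x <= b -> a <= y <= b -> 0 <= t <= 1 ->
    t * f x + (1 - t) * f y <= f (t * x + (1 - t) * y).

Definition increasing_on (f : R -> R) (a b : R) : Prop :=
  forall x y, a <= x <= b -> a <= y <= b -> x <= y -> f x <= f y.

Definition sum1 (u : nat -> R) (k : nat) : R :=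
  sum_f_R0 (fun j => u (S j)) (k - 1).

(* Main.v *)
Require Import Defs.
From Stdlib Require Import Reals Lra Lia ZArith.
Open Scope R_scope.

Definition fr (t : R) : R := t - IZR (Int_part t).
Definition dd (t : R) : R := Rmin (fr t) (1 - fr t).

Lemma fr_bounds t : 0 <= fr t < 1.
Proof. unfold fr; destruct (base_Int_part t); lra. Qed.

Lemma dd_bounds t : 0 <= dd t <= 1/2.
Proof. unfold dd, Rmin; destruct (fr_bounds t); destruct Rle_dec; lra. Qed.

Lemma dd_attained t : exists n : Z, dd t = Rabs (t - IZR n).
Proof.
  pose proof (fr_bounds t). unfold dd, Rmin, fr in *. destruct Rle_dec.
  - exists (Int_part t). rewrite Rabs_right; lra.
  - exists (Int_part t + 1)%Z. rewrite plus_IZR. rewrite Rabs_left1; lra.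
Qed.

Lemma dd_le t (n : Z) : dd t <= Rabs (t - IZR n).
Proof.
  pose proof (fr_bounds t). unfold dd, Rmin, fr in *.
  destruct (Z.le_gt_cases n (Int_part t)) as [Hc|Hc].
  - apply IZR_le in Hc. destruct Rle_dec; rewrite Rabs_right; lra.
  - assert (H' : (Int_part t + 1 <= n)%Z) by (clear -Hc; lia). apply IZR_le in H'.
    rewrite plus_IZR in H'. destruct Rle_dec; rewrite Rabs_left1; lra.
Qed.

Lemma dd_sub a b : dd (a + b) <= dd a + dd b.
Proof.
  destruct (dd_attained a) as [m Hm]. destruct (dd_attained b) as [n Hn].
  eapply Rle_trans. apply (dd_le _ (m + n)%Z). rewrite plus_IZR, Hm, Hn.
  replace (a + b - (IZR m + IZR n)) with ((a - IZR m) + (b - IZR n)) by ring.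
  apply Rabs_triang.
Qed.

Lemma dd_small x : -1 <= x <= 1 -> dd x = Rmin (Rabs x) (1 - Rabs x).
Proof.
  intros Hx. apply Rle_antisym.
  - apply Rmin_glb.
    + pose proof (dd_le x 0). rewrite Rminus_0_r in H. exact H.
    + destruct (Rle_dec 0 x).
      * pose proof (dd_le x 1) as H. rewrite (Rabs_right x) by lra.
        rewrite Rabs_left1 in H; lra.
      * pose proof (dd_le x (-1)) as H. rewrite (Rabs_left x) by lra.
        rewrite Rabs_right in H; lra.
  - destruct (dd_attained x) as [n Hn]. rewrite Hn.
    destruct (Z.eq_dec n 0) as [->|Hne].
    + rewrite Rminus_0_r. apply Rmin_l.
    + eapply Rle_trans. apply Rmin_r.
      assert (1 <= Rabs (IZR n)).
      { rewrite <- abs_IZR. apply IZR_le. lia. }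
      pose proof (Rabs_triang_inv (IZR n) x).
      rewrite Rabs_minus_sym. lra.
Qed.

Section S.
Variable f : R -> R.
Hypothesis hnonneg : forall x, 0 <= x <= 1 -> 0 <= f x.
Hypothesis hconc : concave_on f 0 (1/2).
Hypothesis hincr : increasing_on f 0 (1/2).
Hypothesis hsymm : forall x, 0 <= x <= 1 -> f x = f (1 - x).

Lemma phi_lower u s : 0 <= u <= s -> 0 < s -> s <= 1/2 -> (u / s) * f s <= f u.
Proof.
  intros Hu Hs Hs2.
  assert (H := hconc s 0 (u / s)).
  assert (0 <= u / s <= 1).
  { split. unfold Rdiv; apply Rmult_le_pos; [lra | left; apply Rinv_0_lt_compat; lra].
    apply (Rmult_le_reg_r s); try lra. unfold Rdiv. rewrite Rmult_assoc, Rinv_l; lra. }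
  assert (Hf0 : 0 <= f 0) by (apply hnonneg; lra).
  assert (Hm : u / s * s = u) by (field; lra).
  specialize (H ltac:(lra) ltac:(lra) H0).
  rewrite Rmult_0_r, Rplus_0_r, Hm in H.
  assert (0 <= (1 - u / s) * f 0) by (apply Rmult_le_pos; lra). lra.
Qed.

Lemma phi_sub u v w : 0 <= u <= 1/2 -> 0 <= v <= 1/2 -> 0 <= w <= 1/2 ->
  w <= u + v -> f w <= f u + f v.
Proof.
  intros Hu Hv Hw Hwuv.
  destruct (Req_dec (u + v) 0) as [H0|H0].
  - assert (u = 0) by lra. assert (v = 0) by lra. assert (w = 0) by lra. subst.
    assert (0 <= f 0) by (apply hnonneg; lra). lra.
  - set (s := Rmin (u + v) (1/2)).
    assert (Hs : 0 < s /\ s <= 1/2 /\ s <= u + v /\ u <= s /\ v <= s /\ w <= s).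
    { unfold s, Rmin; destruct Rle_dec; lra. }
    destruct Hs as (Hs1 & Hs2 & Hs3 & Hs4 & Hs5 & Hs6).
    pose proof (phi_lower u s ltac:(lra) Hs1 Hs2).
    pose proof (phi_lower v s ltac:(lra) Hs1 Hs2).
    assert (Hfs : 0 <= f s) by (apply hnonneg; lra).
    assert (f w <= f s) by (apply hincr; lra).
    assert (u / s * f s + v / s * f s = ((u + v) / s) * f s) by (field; lra).
    assert (1 <= (u + v) / s).
    { apply (Rmult_le_reg_r s); try lra. unfold Rdiv. rewrite Rmult_assoc, Rinv_l; lra. }
    assert (f s <= (u + v) / s * f s).
    { rewrite <- (Rmult_1_l (f s)) at 1. apply Rmult_le_compat_r; lra. }
    lra.
Qed.

Definition F t := f (dd t).

Lemma F_sub a b : F (a + b) <= F a + F b.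
Proof.
  unfold F. apply phi_sub; try apply dd_bounds. apply dd_sub.
Qed.

Lemma F_small x : -1 <= x <= 1 -> F x = f (Rabs x).
Proof.
  intros Hx. unfold F. rewrite dd_small by lra. unfold Rmin. destruct Rle_dec.
  - reflexivity.
  - rewrite (hsymm (Rabs x)). reflexivity. unfold Rabs; destruct Rcase_abs; lra.
Qed.

Lemma F_sum g n : F (sum_f_R0 g n) <= sum_f_R0 (fun i => F (g i)) n.
Proof.
  induction n; simpl. lra.
  eapply Rle_trans. apply F_sub. lra.
Qed.
End S.

Theorem lemma1 (f : R -> R)
  (hnonneg : forall x, 0 <= x <= 1 -> 0 <= f x)
  (hconc : concave_on f 0 (1/2))
  (hincr : increasing_on f 0 (1/2))
  (hsymm : forall x, 0 <= x <= 1 -> f x = f (1 - x))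
  (k : nat) (hk : (1 <= k)%nat)
  (xs : nat -> R)
  (hxs : forall i, (1 <= i <= k)%nat -> -1 <= xs i <= 1)
  (hx : -1 <= sum1 xs k <= 1) :
  f (Rabs (sum1 xs k)) <= sum1 (fun i => f (Rabs (xs i))) k.
Proof.
  rewrite <- (F_small f hsymm) by exact hx.
  unfold sum1 in *.
  eapply Rle_trans. apply (F_sum f hnonneg hconc hincr).
  right. apply sum_eq. intros i Hi.
  apply (F_small f hsymm). apply hxs. lia.
Qed.
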